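(* Let $D\mathcal{M}$ be an $\ell c$DCB system, linearly conjugate via the positive diagonal matrix $Q=\mathrm{diag}(q_1,\dots,q_n)$ to the DCB system $D\tilde{\mathcal{M}}$ with reactions $y_{\cdot i}\to\tilde y'_{\cdot i}$, rate constants $\tilde\kappa_i$ and delays $\tau_i$, $i=1,\dots,\tilde r$, and stoichiometric subspace $\tilde{\mathscr S}$. For $a\in\mathbb{R}^n$ define $h_a: C([-\tau,0];\mathbb{R}^n_{\ge0})\to\mathbb{R}$ by $$h_a(\psi)=a^\top\Big[\psi(0)+\sum_{i=1}^{\tilde r}\Big(\tilde\kappa_i\prod_{j=1}^n q_j^{-y_{ji}}\int_{-\tau_i}^0\psi(s)^{y_{\cdot i}}\,ds\Big)Q\,y_{\cdot i}\Big],$$ and for $\theta\in C([-\tau,0];\mathbb{R}^n_{\ge0})$ let $$\mathcal H_\theta=\{\psi\in C([-\tau,0];\mathbb{R}^n_{\ge0}) : h_a(\psi)=h_a(\theta)\text{ for all }a\in (Q^{-1})^\top\tilde{\mathscr S}^\perp\}.$$ Then for every solution $x$ of $D\mathcal{M}$ with initial function $\theta$, $x_t\in\mathcal H_\theta$ for all $t\ge0$.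
   Context: For $x,y\in\mathbb{R}^n$ with $x\ge 0$, write $x^{y}=\prod_{j=1}^n x_j^{y_j}$. A delayed mass-action system on species $X_1,\dots,X_n$ consists of reactions $R_i: y_{\cdot i}\to y'_{\cdot i}$, $i=1,\dots,r$, with complexes $y_{\cdot i},y'_{\cdot i}\in\mathbb{R}^n_{\ge0}$, rate constants $\kappa_i>0$ and delays $\tau_i\ge0$; with $\tau\ge\max_i\tau_i$, its dynamics is the delay differential equation $\dot x(t)=F(x_t):=\sum_{i=1}^r\kappa_i\big[x(t-\tau_i)^{y_{\cdot i}}y'_{\cdot i}-x(t)^{y_{\cdot i}}y_{\cdot i}\big]$, $t\ge 0$, where $x_t(s)=x(t+s)$, $s\in[-\tau,0]$, with initial function $\theta\in C([-\tau,0];\mathbb{R}^n_{\ge0})$. Its stoichiometric subspace is $\mathscr S=\mathrm{span}\{y'_{\cdot i}-y_{\cdot i}\}$, and $\mathscr S^\perp$ its orthogonal complement. A vector $\bar x\in\mathbb{R}^n_{>0}$ is a complex balanced equilibrium if for every complex $\eta$ of the network $\sum_{i: y_{\cdot i}=\eta}\kappa_i\bar x^{y_{\cdot i}}=\sum_{i: y'_{\cdot i}=\eta}\kappa_i\bar x^{y_{\cdot i}}$. A delayed complex balanced (DCB) system is a delayed mass-action system admitting a positive complex balanced equilibrium. Two delayed mass-action systems $D\mathcal{M}$ (right-hand side $F$) and $D\tilde{\mathcal{M}}$ (right-hand side $\tilde F$) on the same species are linearly conjugate via a positive diagonal matrix $Q$ if $F(Q\psi)=Q\tilde F(\psi)$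 for all $\psi\in C([-\tau,0];\mathbb{R}^n_{>0})$, i.e. $x(t)=Q\tilde x(t)$ maps solutions of $D\tilde{\mathcal{M}}$ to solutions of $D\mathcal{M}$. An $\ell c$DCB system is a delayed mass-action system that is linearly conjugate via some positive diagonal matrix to a DCB system. *)

(* Defs.v *)
From Stdlib Require Import Reals.
From Coquelicot Require Import Coquelicot.
Open Scope R_scope.

(* Vectors in R^n are functions nat -> R, only indices j < n matter. *)

Fixpoint fsum (k : nat) (f : nat -> R) : R :=
  match k with O => 0 | S m => fsum m f + f m end.
Fixpoint fprod (k : nat) (f : nat -> R) : R :=
  match k with O => 1 | S m => fprod m f * f m end.

(* real power x^y for x >= 0, with the convention 0^0 = 1 and 0^y = 0 for y <> 0 *)
Definition rpow (x y : R) : R :=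
  if Req_EM_T x 0 then (if Req_EM_T y 0 then 1 else 0) else Rpower x y.

Definition mpow (n : nat) (x y : nat -> R) : R := fprod n (fun j => rpow (x j) (y j)).

Record DMAS := mkDMAS {
  nreac : nat;
  reac : nat -> nat -> R;
  prod : nat -> nat -> R;
  rate : nat -> R;
  delay : nat -> R }.

Definition valid_DMAS (n : nat) (M : DMAS) : Prop :=
  forall i, (i < nreac M)%nat ->
    0 < rate M i /\ 0 <= delay M i /\
    (forall j, (j < n)%nat -> 0 <= reac M i j /\ 0 <= prod M i j).

Definition delay_bound (M : DMAS) (tau : R) : Prop :=
  forall i, (i < nreac M)%nat -> delay M i <= tau.

Definition Frhs (n : nat) (M : DMAS) (psi : R -> nat -> R) (j : nat) : R :=
  fsum (nreac M) (fun i =>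
    rate M i * (mpow n (psi (- delay M i)) (reac M i) * prod M i j
                - mpow n (psi 0) (reac M i) * reac M i j)).

Definition veq (n : nat) (u v : nat -> R) : Prop := forall j, (j < n)%nat -> u j = v j.
Fixpoint veqb (n : nat) (u v : nat -> R) : bool :=
  match n with
  | O => true
  | S m => andb (veqb m u v) (if Req_EM_T (u m) (v m) then true else false)
  end.

Definition is_complex (n : nat) (M : DMAS) (eta : nat -> R) : Prop :=
  exists i, (i < nreac M)%nat /\ (veq n (reac M i) eta \/ veq n (prod M i) eta).

Definition complex_balanced_eq (n : nat) (M : DMAS) (xb : nat -> R) : Prop :=
  (forall j, (j < n)%nat -> 0 < xb j) /\
  forall eta, is_complex n M eta ->
    fsum (nreac M) (fun i => if veqb n (reac M i) eta
                             then rate M i * mpow n xb (reac M i) else 0)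
    = fsum (nreac M) (fun i => if veqb n (prod M i) eta
                               then rate M i * mpow n xb (reac M i) else 0).

Definition DCB (n : nat) (M : DMAS) : Prop :=
  valid_DMAS n M /\ exists xb, complex_balanced_eq n M xb.

Definition cont_on (f : R -> R) (a b : R) : Prop :=
  forall s, a <= s <= b ->
    filterlim f (within (fun u => a <= u <= b) (locally s)) (locally (f s)).
Definition cont_from (f : R -> R) (a : R) : Prop :=
  forall s, a <= s ->
    filterlim f (within (fun u => a <= u) (locally s)) (locally (f s)).

Definition nonneg_state (n : nat) (tau : R) (psi : R -> nat -> R) : Prop :=
  (forall j, (j < n)%nat -> cont_on (fun s => psi s j) (- tau) 0) /\
  (forall s j, - tau <= s <= 0 -> (j < n)%nat -> 0 <= psi s j).
Definition pos_state (n : nat) (tau : R) (psi : R -> nat -> R) : Prop :=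
  (forall j, (j < n)%nat -> cont_on (fun s => psi s j) (- tau) 0) /\
  (forall s j, - tau <= s <= 0 -> (j < n)%nat -> 0 < psi s j).

Definition lin_conj (n : nat) (tau : R) (M Mt : DMAS) (q : nat -> R) : Prop :=
  (forall j, (j < n)%nat -> 0 < q j) /\
  forall psi, pos_state n tau psi ->
    forall j, (j < n)%nat ->
      Frhs n M (fun s k => q k * psi s k) j = q j * Frhs n Mt psi j.

Definition is_solution (n : nat) (tau : R) (M : DMAS) (theta x : R -> nat -> R) : Prop :=
  (forall s j, - tau <= s <= 0 -> (j < n)%nat -> x s j = theta s j) /\
  (forall j, (j < n)%nat -> cont_from (fun t => x t j) (- tau)) /\
  (forall t j, - tau <= t -> (j < n)%nat -> 0 <= x t j) /\
  (forall t j, 0 < t -> (j < n)%nat ->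
     is_derive (fun u => x u j) t (Frhs n M (fun s => x (t + s)) j)).

Definition in_stoich (n : nat) (M : DMAS) (v : nat -> R) : Prop :=
  exists c : nat -> R, forall j, (j < n)%nat ->
    v j = fsum (nreac M) (fun i => c i * (prod M i j - reac M i j)).
Definition in_stoich_perp (n : nat) (M : DMAS) (w : nat -> R) : Prop :=
  forall v, in_stoich n M v -> fsum n (fun j => w j * v j) = 0.

Definition h_fun (n : nat) (Mt : DMAS) (q a : nat -> R) (psi : R -> nat -> R) : R :=
  fsum n (fun j => a j *
    (psi 0 j +
     fsum (nreac Mt) (fun i =>
       (rate Mt i * fprod n (fun k => Rpower (q k) (- reac Mt i k))
        * RInt (fun s => mpow n (psi s) (reac Mt i)) (- delay Mt i) 0)
       * (q j * reac Mt i j)))).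

(* psi in H_theta; a in (Q^{-1})^T St^perp means a = Q^{-1} w with w in St^perp *)
Definition H_set (n : nat) (tau : R) (Mt : DMAS) (q : nat -> R)
    (theta psi : R -> nat -> R) : Prop :=
  nonneg_state n tau psi /\
  forall a : nat -> R,
    (exists w, in_stoich_perp n Mt w /\ forall j, (j < n)%nat -> a j = w j / q j) ->
    h_fun n Mt q a psi = h_fun n Mt q a theta.

(* Main.v *)
Require Import Defs.
From Stdlib Require Import Reals Lra Lia.
From Coquelicot Require Import Coquelicot.
Open Scope R_scope.

Lemma fsum_ext m f g : (forall i, (i < m)%nat -> f i = g i) -> fsum m f = fsum m g.
Proof. induction m; simpl; intros H; auto. rewrite IHm by (intros; apply H; lia). rewrite H by lia; auto. Qed.
Lemma fprod_ext m f g : (forall i, (i < m)%nat -> f i = g i) -> fprod m f = fprod m g.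
Proof. induction m; simpl; intros H; auto. rewrite IHm by (intros; apply H; lia). rewrite H by lia; auto. Qed.
Lemma fsum_plus m f g : fsum m (fun i => f i + g i) = fsum m f + fsum m g.
Proof. induction m; simpl; [lra|]. rewrite IHm; lra. Qed.
Lemma fsum_scal m c f : fsum m (fun i => c * f i) = c * fsum m f.
Proof. induction m; simpl; [lra|]. rewrite IHm; lra. Qed.
Lemma fprod_mult m f g : fprod m (fun i => f i * g i) = fprod m f * fprod m g.
Proof. induction m; simpl; [lra|]. rewrite IHm; lra. Qed.
Lemma mpow_ext n u v y : (forall k, (k < n)%nat -> u k = v k) -> mpow n u y = mpow n v y.
Proof. intros H; unfold mpow; apply fprod_ext; intros; rewrite H; auto. Qed.

Lemma rpow_div x q y : 0 <= x -> 0 < q -> rpow (x / q) y = rpow x y * Rpower q (- y).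
Proof.
  intros Hx Hq. unfold rpow.
  destruct (Req_EM_T x 0) as [E|E].
  - subst x. replace (0 / q) with 0 by (field; lra).
    destruct (Req_EM_T 0 0) as [_|C]; [|lra].
    destruct (Req_EM_T y 0) as [Ey|Ey]; [subst y; rewrite Ropp_0, Rpower_O; lra| lra].
  - destruct (Req_EM_T (x / q) 0) as [E2|E2].
    + exfalso. assert (0 < x / q) by (apply Rdiv_lt_0_compat; lra). lra.
    + unfold Rpower. rewrite <- exp_plus. f_equal.
      unfold Rdiv. rewrite ln_mult by (try apply Rinv_0_lt_compat; lra).
      rewrite ln_Rinv by lra. ring.
Qed.

Lemma mpow_div n x q y : (forall k, (k < n)%nat -> 0 <= x k /\ 0 < q k) ->
  mpow n (fun k => x k / q k) y = mpow n x y * fprod n (fun k => Rpower (q k) (- y k)).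
Proof.
  intros H. unfold mpow. rewrite <- fprod_mult. apply fprod_ext; intros k Hk.
  destruct (H k Hk). apply rpow_div; auto.
Qed.

Lemma rpow_pos x y : 0 < x -> rpow x y = Rpower x y.
Proof. intros. unfold rpow. destruct (Req_EM_T x 0); [lra|auto]. Qed.

Lemma rpow_cont y x0 : 0 <= y -> 0 <= x0 -> forall eps, 0 < eps ->
  exists del, 0 < del /\ forall x, 0 <= x -> Rabs (x - x0) < del ->
    Rabs (rpow x y - rpow x0 y) < eps.
Proof.
  intros Hy Hx0 eps Heps.
  destruct (Rle_lt_or_eq_dec 0 x0 Hx0) as [Hp|Hz].
  - assert (C : continuity_pt (fun x => Rpower x y) x0).
    { apply derivable_continuous_pt. exists (y * Rpower x0 (y - 1)).
      apply derivable_pt_lim_power; auto. }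
    unfold continuity_pt, continue_in, limit1_in, limit_in in C. simpl in C.
    destruct (C eps Heps) as [d [Hd Hc]].
    exists (Rmin d (x0/2)). split. { apply Rmin_glb_lt; lra. }
    intros x Hx Hxd.
    assert (Hd1 : Rabs (x - x0) < d) by (eapply Rlt_le_trans; [exact Hxd| apply Rmin_l]).
    assert (Hd2 : Rabs (x - x0) < x0/2) by (eapply Rlt_le_trans; [exact Hxd| apply Rmin_r]).
    assert (0 < x). { apply Rabs_def2 in Hd2. lra. }
    rewrite !rpow_pos by lra.
    destruct (Req_EM_T x0 x) as [E|E]. { subst. rewrite Rminus_diag, Rabs_R0; auto. }
    apply (Hc x). split.
    { unfold D_x, no_cond. split; [exact I|auto]. }
    unfold R_dist; auto.
  - subst x0. destruct (Rle_lt_or_eq_dec 0 y Hy) as [Hyp|Hyz].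
    + exists (exp (ln eps / y)). split; [apply exp_pos|].
      intros x Hx Hxd. unfold rpow at 2. destruct (Req_EM_T 0 0); [|lra].
      destruct (Req_EM_T y 0); [lra|]. rewrite Rminus_0_r.
      unfold rpow. destruct (Req_EM_T x 0). { destruct (Req_EM_T y 0); [lra|]. rewrite Rabs_R0; auto. }
      rewrite Rminus_0_r in Hxd. rewrite Rabs_right in Hxd by lra.
      unfold Rpower. rewrite Rabs_right by (left; apply exp_pos).
      rewrite <- (exp_ln eps) by auto. apply exp_increasing.
      assert (ln x < ln eps / y).
      { rewrite <- (ln_exp (ln eps / y)). apply ln_increasing; lra. }
      replace (ln eps) with (y * (ln eps / y)) by (field; lra).
      apply Rmult_lt_compat_l; lra.
    + subst y. exists 1. split; [lra|]. intros x Hx _.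
      unfold rpow. destruct (Req_EM_T 0 0); [|lra].
      destruct (Req_EM_T x 0); destruct (Req_EM_T 0 0); try lra.
      * rewrite Rminus_diag, Rabs_R0; auto.
      * rewrite Rpower_O by lra. rewrite Rminus_diag, Rabs_R0; auto.
Qed.

Lemma cont_rpow_comp f y u0 : 0 <= y -> (forall u, 0 <= f u) -> continuity_pt f u0 ->
  continuity_pt (fun u => rpow (f u) y) u0.
Proof.
  intros Hy Hf Hc. unfold continuity_pt, continue_in, limit1_in, limit_in in *. simpl in *.
  unfold R_dist in *. intros eps Heps.
  destruct (rpow_cont y (f u0) Hy (Hf u0) eps Heps) as [d [Hd Hr]].
  destruct (Hc d Hd) as [a [Ha Hca]]. exists a. split; [exact Ha|].
  intros x Hx. apply Hr; auto.
Qed.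

Lemma lim_rpow u l y : 0 <= y -> (forall m, 0 <= u m) -> 0 <= l -> is_lim_seq u l ->
  is_lim_seq (fun m => rpow (u m) y) (rpow l y).
Proof.
  intros Hy Hu Hl H. apply is_lim_seq_spec. apply is_lim_seq_spec in H.
  intros eps. destruct (rpow_cont y l Hy Hl eps (cond_pos eps)) as [d [Hd Hr]].
  destruct (H (mkposreal d Hd)) as [N HN]. exists N. intros m Hm.
  apply Hr; [apply Hu| apply (HN m Hm)].
Qed.

Lemma lim_fsum m (f : nat -> nat -> R) (l : nat -> R) : (forall i, (i < m)%nat -> is_lim_seq (fun k => f k i) (l i)) ->
  is_lim_seq (fun k => fsum m (f k)) (fsum m l).
Proof.
  induction m; simpl; intros H. { apply is_lim_seq_const. }
  apply is_lim_seq_plus'; [apply IHm; intros; apply H; lia | apply H; lia].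
Qed.
Lemma lim_fprod m (f : nat -> nat -> R) (l : nat -> R) : (forall i, (i < m)%nat -> is_lim_seq (fun k => f k i) (l i)) ->
  is_lim_seq (fun k => fprod m (f k)) (fprod m l).
Proof.
  induction m; simpl; intros H. { apply is_lim_seq_const. }
  apply is_lim_seq_mult'; [apply IHm; intros; apply H; lia | apply H; lia].
Qed.
Lemma lim_mpow n (u : nat -> nat -> R) (u0 y : nat -> R) :
  (forall k, (k < n)%nat -> is_lim_seq (fun m => u m k) (u0 k)) ->
  (forall m k, (k < n)%nat -> 0 <= u m k) -> (forall k, (k < n)%nat -> 0 <= u0 k) ->
  (forall k, (k < n)%nat -> 0 <= y k) ->
  is_lim_seq (fun m => mpow n (u m) y) (mpow n u0 y).
Proof.
  intros H1 H2 H3 H4. unfold mpow. apply (lim_fprod n (fun m k => rpow (u m k) (y k))).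
  intros k Hk. apply lim_rpow; auto.
Qed.

Lemma lim_Frhs n M tau (psi : nat -> R -> nat -> R) (psi0 : R -> nat -> R) j :
  valid_DMAS n M -> delay_bound M tau -> 0 <= tau ->
  (forall m s k, - tau <= s <= 0 -> (k < n)%nat -> 0 <= psi m s k) ->
  (forall s k, - tau <= s <= 0 -> (k < n)%nat -> 0 <= psi0 s k) ->
  (forall s k, - tau <= s <= 0 -> (k < n)%nat -> is_lim_seq (fun m => psi m s k) (psi0 s k)) ->
  is_lim_seq (fun m => Frhs n M (psi m) j) (Frhs n M psi0 j).
Proof.
  intros HV HD Ht H1 H2 H3. unfold Frhs.
  apply (lim_fsum _ (fun m i => rate M i * (mpow n (psi m (- delay M i)) (reac M i) * prod M i j
                - mpow n (psi m 0) (reac M i) * reac M i j))).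
  intros i Hi. destruct (HV i Hi) as [Hr [Hd Hc]]. specialize (HD i Hi).
  assert (B1 : - tau <= - delay M i <= 0) by lra. assert (B0 : - tau <= 0 <= 0) by lra.
  apply is_lim_seq_mult'; [apply is_lim_seq_const|]; apply is_lim_seq_minus'; apply is_lim_seq_mult'; try apply is_lim_seq_const;
   apply lim_mpow; intros; try (apply Hc; auto); auto.
Qed.


Lemma eps_lim : is_lim_seq (fun m => / INR (S m)) 0.
Proof.
  apply (is_lim_seq_incr_1 (fun m => / INR m)).
  replace (Finite 0) with (Rbar_inv p_infty) by reflexivity.
  apply is_lim_seq_inv; [apply is_lim_seq_INR| discriminate].
Qed.
Lemma eps_pos m : 0 < / INR (S m).
Proof. apply Rinv_0_lt_compat. apply lt_0_INR. lia. Qed.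

Lemma cont_on_plus_c f a b c : cont_on f a b -> cont_on (fun s => f s + c) a b.
Proof.
  intros H s Hs. apply (filterlim_comp _ _ _ f (fun z => z + c) _ _ _ (H s Hs)).
  refine (proj1 (continuity_pt_filterlim (fun z => z + c) (f s)) _). reg.
Qed.

Lemma lim_uniq (u v : nat -> R) (l1 l2 : R) : is_lim_seq u l1 -> is_lim_seq v l2 -> (forall m, u m = v m) -> l1 = l2.
Proof.
  intros H1 H2 E. apply is_lim_seq_unique in H1. apply is_lim_seq_unique in H2.
  rewrite (Lim_seq_ext u v E) in H1. rewrite H1 in H2. injection H2; auto.
Qed.

Lemma lim_shift a c : is_lim_seq (fun m => c * (a + / INR (S m))) (c * a).
Proof.
  replace (c * a) with (c * (a + 0)) by ring.
  apply is_lim_seq_mult'; [apply is_lim_seq_const|].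
  apply is_lim_seq_plus'; [apply is_lim_seq_const| apply eps_lim].
Qed.

Lemma conj_ext n tau M Mt q psi j : valid_DMAS n M -> valid_DMAS n Mt ->
  delay_bound M tau -> delay_bound Mt tau -> 0 <= tau -> lin_conj n tau M Mt q ->
  nonneg_state n tau psi -> (j < n)%nat ->
  Frhs n M (fun s k => q k * psi s k) j = q j * Frhs n Mt psi j.
Proof.
  intros HV HVt HD HDt Ht [Hq Hc] [Hcont Hnn] Hj.
  set (ps := fun m s k => psi s k + / INR (S m)).
  assert (Hpos : forall m, pos_state n tau (ps m)).
  { intros m; split; intros. { apply cont_on_plus_c; auto. }
    unfold ps. pose proof (eps_pos m). specialize (Hnn s j0 H H0). lra. }
  assert (L1 : is_lim_seq (fun m => Frhs n M (fun s k => q k * ps m s k) j)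
                 (Frhs n M (fun s k => q k * psi s k) j)).
  { apply (lim_Frhs n M tau (fun m s k => q k * ps m s k)); auto.
    - intros m s k Hs Hk. unfold ps. pose proof (eps_pos m). specialize (Hnn s k Hs Hk).
      specialize (Hq k Hk). apply Rmult_le_pos; lra.
    - intros s k Hs Hk. specialize (Hnn s k Hs Hk). specialize (Hq k Hk). apply Rmult_le_pos; lra.
    - intros s k Hs Hk. apply lim_shift. }
  assert (L2 : is_lim_seq (fun m => q j * Frhs n Mt (ps m) j) (q j * Frhs n Mt psi j)).
  { apply is_lim_seq_mult'; [apply is_lim_seq_const|].
    apply (lim_Frhs n Mt tau ps); auto.
    - intros m s k Hs Hk. unfold ps. pose proof (eps_pos m). specialize (Hnn s k Hs Hk). lra.
    - intros s k Hs Hk. replace (psi s k) with (1 * psi s k) by ring.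
      apply (is_lim_seq_ext (fun m => 1 * (psi s k + / INR (S m)))); [intros; unfold ps; ring|].
      apply lim_shift. }
  apply (lim_uniq _ _ _ _ L1 L2). intros m. apply Hc; auto.
Qed.


Lemma Rmax_cont c u0 : continuity_pt (fun u => Rmax u c) u0.
Proof.
  unfold continuity_pt, continue_in, limit1_in, limit_in. simpl. unfold R_dist.
  intros eps Heps. exists eps. split; auto. intros x [_ Hx].
  apply Rabs_def2 in Hx. apply Rabs_def1; unfold Rmax;
  destruct (Rle_dec x c); destruct (Rle_dec u0 c); lra.
Qed.

Lemma cont_xe f a (H : cont_from f a) u0 : continuity_pt (fun u => f (Rmax u a)) u0.
Proof.
  apply continuity_pt_filterlim.
  apply (filterlim_comp _ _ _ (fun u => Rmax u a) f (locally u0) (within (fun v => a <= v) (locally (Rmax u0 a)))).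
  - intros P HP. unfold within in HP.
    apply (proj1 (continuity_pt_filterlim _ _) (Rmax_cont a u0)) in HP.
    change (locally u0 (fun u => P (Rmax u a))).
    apply (filter_imp (fun u => a <= Rmax u a -> P (Rmax u a))); [|exact HP].
    intros u Hu. apply Hu. apply Rmax_r.
  - apply H. apply Rmax_r.
Qed.

Lemma cont_fprod m (f : R -> nat -> R) u0 : (forall k, (k < m)%nat -> continuity_pt (fun u => f u k) u0) ->
  continuity_pt (fun u => fprod m (f u)) u0.
Proof.
  induction m; simpl; intros H. { apply continuity_pt_const. intros a b; auto. }
  apply (continuity_pt_mult (fun u => fprod m (f u)) (fun u => f u m)); [apply IHm; intros; apply H; lia| apply H; lia].
Qed.
Lemma cont_fsum m (f : R -> nat -> R) u0 : (forall k, (k < m)%nat -> continuity_pt (fun u => f u k) u0) ->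
  continuity_pt (fun u => fsum m (f u)) u0.
Proof.
  induction m; simpl; intros H. { apply continuity_pt_const. intros a b; auto. }
  apply (continuity_pt_plus (fun u => fsum m (f u)) (fun u => f u m)); [apply IHm; intros; apply H; lia| apply H; lia].
Qed.

Lemma cont_G n (x : R -> nat -> R) tau y u0 :
  (forall k, (k < n)%nat -> cont_from (fun t => x t k) (- tau)) ->
  (forall t k, - tau <= t -> (k < n)%nat -> 0 <= x t k) ->
  (forall k, (k < n)%nat -> 0 <= y k) ->
  continuity_pt (fun u => mpow n (x (Rmax u (- tau))) y) u0.
Proof.
  intros Hc Hn Hy. unfold mpow. apply (cont_fprod n (fun u k => rpow (x (Rmax u (-tau)) k) (y k))).
  intros k Hk. apply (cont_rpow_comp (fun u => x (Rmax u (-tau)) k)); auto.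
  - intros u. apply Hn; auto. apply Rmax_r.
  - apply (cont_xe (fun t => x t k)). auto.
Qed.

Lemma is_derive_eq (f : R -> R) t l l' : is_derive f t l -> l = l' -> is_derive f t l'.
Proof. intros H E; subst; auto. Qed.

Lemma deriv_J (G : R -> R) d t : (forall u, continuity_pt G u) ->
  is_derive (fun t => RInt G (t - d) t) t (G t - G (t - d)).
Proof.
  intros HG.
  assert (HC : forall u, continuous G u) by (intros; apply continuity_pt_filterlim; auto).
  assert (HE : forall a b, ex_RInt G a b) by (intros; apply (@ex_RInt_continuous R_CompleteNormedModule); intros; auto).
  apply (is_derive_ext (fun t => RInt G 0 t - RInt G 0 (t - d))).
  { intros u. rewrite <- (RInt_Chasles G 0 (u - d) u) by auto. unfold plus; simpl. ring. }
  assert (D1 : forall b, is_derive (RInt G 0) b (G b)).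
  { intros b. apply (is_derive_RInt G (RInt G 0) 0 b); auto.
    apply filter_forall. intros; apply (@RInt_correct R_CompleteNormedModule); auto. }
  assert (D2 : is_derive (fun u => u - d) t 1).
  { auto_derive; auto; ring. }
  pose proof (is_derive_comp (RInt G 0) (fun u => u - d) t _ _ (D1 (t - d)) D2) as D3.
  pose proof (is_derive_minus _ _ t _ _ (D1 t) D3) as D4.
  eapply is_derive_eq; [exact D4|]. unfold minus, plus, opp, scal; simpl. unfold mult; simpl. ring.
Qed.


Definition Gf n Mt tau (x : R -> nat -> R) i u := mpow n (x (Rmax u (- tau))) (reac Mt i).
Definition cc n Mt (q : nat -> R) i := rate Mt i * fprod n (fun k => Rpower (q k) (- reac Mt i k)).
Definition Htil n Mt tau (q a : nat -> R) x t :=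
  fsum n (fun j => a j * (x (Rmax t (- tau)) j +
    fsum (nreac Mt) (fun i => (cc n Mt q i * RInt (Gf n Mt tau x i) (t - delay Mt i) t) * (q j * reac Mt i j)))).

Lemma RInt_shift (G : R -> R) a b t : (forall u, continuity_pt G u) ->
  RInt (fun s => G (t + s)) a b = RInt G (t + a) (t + b).
Proof.
  intros HG.
  assert (HC : forall u, continuous G u) by (intros; apply continuity_pt_filterlim; auto).
  assert (HE : forall a b, ex_RInt G a b) by (intros; apply (@ex_RInt_continuous R_CompleteNormedModule); intros; auto).
  transitivity (RInt (fun y => scal 1 (G (1 * y + t))) a b).
  { apply RInt_ext. intros s _. unfold scal; simpl; unfold mult; simpl. rewrite Rmult_1_l. f_equal. ring. }
  etransitivity. { apply (@RInt_comp_lin R_CompleteNormedModule G 1 t a b). apply HE. } f_equal; ring.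
Qed.

Lemma cont_Gf n Mt tau x i u0 : valid_DMAS n Mt -> (i < nreac Mt)%nat ->
  (forall k, (k < n)%nat -> cont_from (fun t => x t k) (- tau)) ->
  (forall t k, - tau <= t -> (k < n)%nat -> 0 <= x t k) ->
  continuity_pt (Gf n Mt tau x i) u0.
Proof.
  intros HV Hi Hc Hn. unfold Gf. apply cont_G; auto. intros k Hk. apply (HV i Hi); auto.
Qed.

Lemma h_Htil n Mt tau q a x t : valid_DMAS n Mt -> delay_bound Mt tau -> 0 <= tau -> 0 <= t ->
  (forall k, (k < n)%nat -> cont_from (fun t => x t k) (- tau)) ->
  (forall t k, - tau <= t -> (k < n)%nat -> 0 <= x t k) ->
  h_fun n Mt q a (fun s => x (t + s)) = Htil n Mt tau q a x t.
Proof.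
  intros HV HD Ht Ht0 Hc Hn. unfold h_fun, Htil. apply fsum_ext. intros j Hj. f_equal. f_equal.
  { rewrite Rplus_0_r, Rmax_left by lra. auto. }
  apply fsum_ext. intros i Hi. unfold cc. f_equal. f_equal.
  destruct (HV i Hi) as [_ [Hd _]]. specialize (HD i Hi).
  transitivity (RInt (fun s => Gf n Mt tau x i (t + s)) (- delay Mt i) 0).
  { apply RInt_ext. intros s Hs. rewrite Rmin_left in Hs by lra. rewrite Rmax_right in Hs by lra.
    unfold Gf. rewrite Rmax_left by lra. auto. }
  rewrite RInt_shift. { f_equal; ring. }
  intros; apply cont_Gf; auto.
Qed.

Lemma h_fun_ext n Mt tau q a psi psi' : valid_DMAS n Mt -> delay_bound Mt tau -> 0 <= tau ->
  (forall s k, - tau <= s <= 0 -> (k < n)%nat -> psi s k = psi' s k) ->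
  h_fun n Mt q a psi = h_fun n Mt q a psi'.
Proof.
  intros HV HD Ht H. unfold h_fun. apply fsum_ext. intros j Hj. f_equal. f_equal.
  { apply H; auto; lra. }
  apply fsum_ext. intros i Hi. f_equal. f_equal.
  destruct (HV i Hi) as [_ [Hd _]]. specialize (HD i Hi).
  apply RInt_ext. intros s Hs. rewrite Rmin_left in Hs by lra. rewrite Rmax_right in Hs by lra.
  apply mpow_ext. intros k Hk. apply H; auto; lra.
Qed.


Lemma is_derive_fsum m (f : nat -> R -> R) (df : nat -> R) t :
  (forall k, (k < m)%nat -> is_derive (f k) t (df k)) ->
  is_derive (fun u => fsum m (fun k => f k u)) t (fsum m df).
Proof.
  induction m; simpl; intros H.
  { apply (is_derive_eq _ _ zero); [apply is_derive_const| reflexivity]. }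
  apply (is_derive_plus (fun u => fsum m (fun k => f k u)) (f m)); [apply IHm; intros; apply H; lia| apply H; lia].
Qed.

Lemma deriv_cmk (f : R -> R) t df c k : is_derive f t df ->
  is_derive (fun u => (c * f u) * k) t ((c * df) * k).
Proof.
  intros H. apply (is_derive_ext (fun u => (c * k) * f u)); [intros u; simpl; ring|].
  eapply is_derive_eq; [apply is_derive_scal; exact H| simpl; ring].
Qed.

Lemma cont_J (G : R -> R) d t : (forall u, continuity_pt G u) ->
  continuity_pt (fun u => RInt G (u - d) u) t.
Proof.
  intros HG. apply continuity_pt_filterlim. apply (@ex_derive_continuous R_AbsRing R_NormedModule (fun u => RInt G (u - d) u)).
  eexists. apply deriv_J; auto.
Qed.

Lemma Htil_cont (n : nat) (Mt : DMAS) (tau : R) (q a : nat -> R) (x : R -> nat -> R)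
  (HVt : valid_DMAS n Mt)
  (Hc : forall k, (k < n)%nat -> cont_from (fun t => x t k) (- tau))
  (Hn : forall t k, - tau <= t -> (k < n)%nat -> 0 <= x t k) t :
  continuity_pt (Htil n Mt tau q a x) t.
Proof.
  unfold Htil. apply (cont_fsum n (fun u j => a j * (x (Rmax u (- tau)) j +
    fsum (nreac Mt) (fun i => (cc n Mt q i * RInt (Gf n Mt tau x i) (u - delay Mt i) u) * (q j * reac Mt i j))))).
  intros j Hj.
  apply continuity_pt_mult; [apply continuity_pt_const; intros ? ?; auto|].
  apply continuity_pt_plus; [apply (cont_xe (fun t => x t j)); auto|].
  apply (cont_fsum _ (fun u i => (cc n Mt q i * RInt (Gf n Mt tau x i) (u - delay Mt i) u) * (q j * reac Mt i j))).
  intros i Hi.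
  apply (continuity_pt_mult (fun u => cc n Mt q i * RInt (Gf n Mt tau x i) (u - delay Mt i) u) (fun _ => q j * reac Mt i j)); [|apply continuity_pt_const; intros ? ?; auto].
  apply (continuity_pt_mult (fun _ => cc n Mt q i)); [apply continuity_pt_const; intros ? ?; auto|].
  apply cont_J. intros; apply cont_Gf; auto.
Qed.

Lemma Htil_deriv (n : nat) (M Mt : DMAS) (tau : R) (q a : nat -> R) (x : R -> nat -> R)
  (HVt : valid_DMAS n Mt) (Ht : 0 <= tau)
  (Hc : forall k, (k < n)%nat -> cont_from (fun t => x t k) (- tau))
  (Hn : forall t k, - tau <= t -> (k < n)%nat -> 0 <= x t k)
  (Hder : forall t j, 0 < t -> (j < n)%nat ->
     is_derive (fun u => x u j) t (Frhs n M (fun s => x (t + s)) j)) t : 0 < t -> is_derive (Htil n Mt tau q a x) t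
  (fsum n (fun j => a j * (Frhs n M (fun s => x (t + s)) j +
     fsum (nreac Mt) (fun i => (cc n Mt q i * (Gf n Mt tau x i t - Gf n Mt tau x i (t - delay Mt i))) * (q j * reac Mt i j))))).
Proof.
  intros Htp. unfold Htil. apply (is_derive_fsum n (fun j u => a j * (x (Rmax u (- tau)) j +
    fsum (nreac Mt) (fun i => (cc n Mt q i * RInt (Gf n Mt tau x i) (u - delay Mt i) u) * (q j * reac Mt i j))))).
  intros j Hj. apply is_derive_scal.
  apply (is_derive_plus (fun u => x (Rmax u (- tau)) j)
     (fun u => fsum (nreac Mt) (fun i => (cc n Mt q i * RInt (Gf n Mt tau x i) (u - delay Mt i) u) * (q j * reac Mt i j)))).
  - apply (is_derive_ext_loc (fun u => x u j)); [|apply Hder; auto].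
    exists (mkposreal t Htp). intros u Hu. simpl in Hu.
    unfold ball in Hu; simpl in Hu; unfold AbsRing_ball, abs, minus, plus, opp in Hu; simpl in Hu.
    apply Rabs_def2 in Hu. rewrite Rmax_left by lra. auto.
  - apply (is_derive_fsum _ (fun i u => (cc n Mt q i * RInt (Gf n Mt tau x i) (u - delay Mt i) u) * (q j * reac Mt i j))).
    intros i Hi. apply deriv_cmk. apply deriv_J. intros; apply cont_Gf; auto.
Qed.


Lemma cont_on_div_c f a b c : cont_on f a b -> cont_on (fun s => f s / c) a b.
Proof.
  intros H s Hs. apply (filterlim_comp _ _ _ f (fun z => z / c) _ _ _ (H s Hs)).
  refine (proj1 (continuity_pt_filterlim (fun z => z / c) (f s)) _).
  apply (continuity_pt_mult (fun z => z) (fun _ => / c)); [apply continuity_pt_id| apply continuity_pt_const; intros ? ?; auto].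
Qed.

Lemma cont_on_xt f tau t : cont_from f (- tau) -> 0 <= t -> cont_on (fun s => f (t + s)) (- tau) 0.
Proof.
  intros H Ht s Hs.
  assert (C : continuity_pt (fun s => f (Rmax (t + s) (- tau))) s).
  { apply (continuity_pt_comp (fun s => t + s) (fun u => f (Rmax u (- tau)))).
    - reg. - apply cont_xe; auto. }
  apply continuity_pt_filterlim in C.
  rewrite Rmax_left in C by lra.
  intros P HP. specialize (C P HP). unfold filtermap in *. unfold within.
  destruct C as [e He]. exists e. intros u Hu Hd.
  specialize (He u Hu). simpl in He. rewrite Rmax_left in He by lra. auto.
Qed.

Lemma Frhs_ext n M psi psi' j : (forall s k, (k < n)%nat -> psi s k = psi' s k) ->
  Frhs n M psi j = Frhs n M psi' j.
Proof.
  intros H. unfold Frhs. apply fsum_ext. intros i Hi.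
  rewrite (mpow_ext n (psi (- delay M i)) (psi' (- delay M i))) by auto.
  rewrite (mpow_ext n (psi 0) (psi' 0)) by auto. auto.
Qed.

Lemma Dexp_zero n M Mt tau q a w x t :
  valid_DMAS n M -> valid_DMAS n Mt -> delay_bound M tau -> delay_bound Mt tau -> 0 <= tau ->
  lin_conj n tau M Mt q ->
  (forall k, (k < n)%nat -> cont_from (fun t => x t k) (- tau)) ->
  (forall t k, - tau <= t -> (k < n)%nat -> 0 <= x t k) ->
  in_stoich_perp n Mt w -> (forall j, (j < n)%nat -> a j = w j / q j) -> 0 < t ->
  fsum n (fun j => a j * (Frhs n M (fun s => x (t + s)) j +
     fsum (nreac Mt) (fun i => (cc n Mt q i * (Gf n Mt tau x i t - Gf n Mt tau x i (t - delay Mt i))) * (q j * reac Mt i j)))) = 0.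
Proof.
  intros HV HVt HD HDt Ht Hlc Hc Hn Hw Ha Htp.
  pose proof Hlc as [Hq _].
  set (phi := fun s k => x (t + s) k / q k).
  assert (Hphi : nonneg_state n tau phi).
  { split.
    - intros k Hk. unfold phi. apply (cont_on_div_c (fun s => x (t + s) k) (- tau) 0 (q k)). apply (cont_on_xt (fun u => x u k) tau t); auto; lra.
    - intros s k Hs Hk. unfold phi. specialize (Hq k Hk). apply Rdiv_le_0_compat; [apply Hn; auto; lra| lra]. }
  set (C := fun i => cc n Mt q i * Gf n Mt tau x i (t - delay Mt i)).
  rewrite <- (Hw (fun j => fsum (nreac Mt) (fun i => C i * (prod Mt i j - reac Mt i j)))).
  2: { exists C. intros; auto. }
  apply fsum_ext. intros j Hj.
  assert (EF : Frhs n M (fun s => x (t + s)) j = q j * Frhs n Mt phi j).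
  { rewrite <- (conj_ext n tau M Mt q phi j); auto.
    apply Frhs_ext. intros s k Hk. unfold phi. specialize (Hq k Hk). field. lra. }
  rewrite EF. unfold Frhs.
  assert (E : q j * fsum (nreac Mt) (fun i => rate Mt i * (mpow n (phi (- delay Mt i)) (reac Mt i) * prod Mt i j -
          mpow n (phi 0) (reac Mt i) * reac Mt i j)) +
     fsum (nreac Mt) (fun i => cc n Mt q i * (Gf n Mt tau x i t - Gf n Mt tau x i (t - delay Mt i)) * (q j * reac Mt i j))
     = q j * fsum (nreac Mt) (fun i => C i * (prod Mt i j - reac Mt i j))).
  { rewrite <- !fsum_scal, <- fsum_plus. apply fsum_ext. intros i Hi.
    destruct (HVt i Hi) as [_ [Hd _]]. specialize (HDt i Hi).
    unfold phi. rewrite !mpow_div.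
    2,3: intros k Hk; split; [apply Hn; auto; lra| apply Hq; auto].
    unfold C, Gf, cc. rewrite (Rmax_left t) by lra. rewrite (Rmax_left (t - delay Mt i)) by lra.
    rewrite Rplus_0_r. unfold Rminus. ring. }
  rewrite E. rewrite Ha by auto. specialize (Hq j Hj). field. lra.
Qed.


Theorem mainTheorem3 (n : nat) (M Mt : DMAS) (tau : R) (q : nat -> R)
    (theta x : R -> nat -> R) :
  valid_DMAS n M -> DCB n Mt -> 0 <= tau ->
  delay_bound M tau -> delay_bound Mt tau ->
  lin_conj n tau M Mt q ->
  nonneg_state n tau theta ->
  is_solution n tau M theta x ->
  forall t, 0 <= t -> H_set n tau Mt q theta (fun s => x (t + s)).
Proof.
  intros HV [HVt _] Ht HD HDt Hlc Hth [Hinit [Hc [Hn Hder]]] t Ht0.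
  split.
  - split.
    + intros j Hj. apply (cont_on_xt (fun u => x u j) tau t); auto.
    + intros s j Hs Hj. apply Hn; auto; lra.
  - intros a [w [Hw Ha]].
    rewrite (h_Htil n Mt tau q a x t) by auto.
    rewrite (h_fun_ext n Mt tau q a theta (fun s => x (0 + s))) by
      (auto; intros s k Hs Hk; rewrite Rplus_0_l; symmetry; apply Hinit; auto).
    rewrite (h_Htil n Mt tau q a x 0) by (auto; lra).
    destruct (Rle_lt_or_eq_dec 0 t Ht0) as [Htp|E]; [|subst; auto].
    destruct (MVT_gen (Htil n Mt tau q a x) 0 t (fun _ => 0)) as [c [_ Hcc]].
    + intros y Hy. rewrite Rmin_left in Hy by lra. rewrite Rmax_right in Hy by lra.
      eapply is_derive_eq; [apply (Htil_deriv n M Mt tau q a x); auto; lra|].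
      apply (Dexp_zero n M Mt tau q a w x y); auto; lra.
    + intros y _. apply Htil_cont; auto.
    + lra.
Qed.
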